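(* The identity map $\mathrm{id}_2:M_2\to M_2$ generates an exposed ray of the convex cone $\mathbb P_1[M_2,M_2]$ of all positive linear maps from $M_2$ into $M_2$.
   Context: $M_2$ denotes the algebra of $2\times 2$ complex matrices. A linear map $M_2\to M_2$ is positive if it sends positive semidefinite matrices to positive semidefinite matrices; $\mathbb P_1[M_2,M_2]$ is the convex cone of such maps, regarded in the real vector space of Hermiticity-preserving linear maps $M_2\to M_2$. A nonzero $\phi$ in the cone generates an exposed ray if there is a real linear functional $f$ on that space with $f\ge0$ on the cone and $\{\psi\in\mathbb P_1[M_2,M_2]: f(\psi)=0\}=\{\lambda\phi:\lambda\ge0\}$. *)

(* Defs.v *)
From HB Require Import structures.
From mathcomp Require Import all_boot all_order all_algebra.
From mathcomp Require Import reals complex.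
Set Implicit Arguments. Unset Strict Implicit. Unset Printing Implicit Defensive.
Import Order.TTheory GRing.Theory Num.Theory.
Local Open Scope ring_scope.
Local Open Scope complex_scope.

Section M2.
Variable R : realType.

Definition M2 := 'M[R[i]]_2.

Definition adjmx (A : M2) : M2 := map_mx Num.conj (A^T).

Definition hermitian (A : M2) : Prop := adjmx A = A.

Definition psd (A : M2) : Prop :=
  hermitian A /\
  forall v : 'cV[R[i]]_2, 0 <= ((map_mx Num.conj (v^T)) *m A *m v) 0 0.

Definition clinear_map (phi : M2 -> M2) : Prop :=
  forall (a : R[i]) (A B : M2), phi (a *: A + B) = a *: phi A + phi B.

Definition herm_pres (phi : M2 -> M2) : Prop :=
  clinear_map phi /\ forall A : M2, phi (adjmx A) = adjmx (phi A).

Definition positive_map (phi : M2 -> M2) : Prop :=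
  clinear_map phi /\ forall A : M2, psd A -> psd (phi A).

(* real-linear functional on the real vector space of Hermiticity-preserving
   linear maps (its values outside that space are irrelevant) *)
Definition real_lin_functional (f : (M2 -> M2) -> R) : Prop :=
  forall (r : R) (phi psi : M2 -> M2), herm_pres phi -> herm_pres psi ->
    f (fun A => r%:C *: phi A + psi A) = r * f phi + f psi.

Definition exposed_ray (phi : M2 -> M2) : Prop :=
  positive_map phi /\ (exists A : M2, phi A != 0) /\
  exists f : (M2 -> M2) -> R,
    real_lin_functional f /\
    (forall psi, positive_map psi -> 0 <= f psi) /\
    (forall psi, (positive_map psi /\ f psi = 0) <->
                 (exists l : R, 0 <= l /\ forall A, psi A = l%:C *: phi A)).

End M2.

(* Main.v *)
Require Import Defs.
From mathcomp Require Import all_boot all_order all_algebra.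
From mathcomp Require Import reals complex.
From mathcomp Require Import ring.
Import Order.TTheory GRing.Theory Num.Theory.
Local Open Scope ring_scope.

Section Helpers.
Variable R : realType.
Local Notation C := (R[i]).
Local Notation M := (M2 R).

Definition form (A : M) (x0 x1 y0 y1 : C) : C :=
  Num.conj x0 * (A 0 0 * y0 + A 0 1 * y1) + Num.conj x1 * (A 1 0 * y0 + A 1 1 * y1).

Lemma quadE (A : M) (v w : 'cV[C]_2) :
  ((map_mx Num.conj (v^T)) *m A *m w) 0 0 = form A (v 0 0) (v 1 0) (w 0 0) (w 1 0).
Proof.
have E1 : lift ord0 ord0 = 1 :> 'I_2 by apply: val_inj.
rewrite /form !mxE !big_ord_recl !big_ord0 !mxE !big_ord_recl !big_ord0 !mxE E1.
ring.
Qed.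

Definition mk (a b c d : C) : M := \matrix_(i < 2, j < 2)
  (if i == 0 then (if j == 0 then a else b) else (if j == 0 then c else d)).

Lemma mk00 a b c d : mk a b c d 0 0 = a. Proof. by rewrite mxE. Qed.
Lemma mk01 a b c d : mk a b c d 0 1 = b. Proof. by rewrite mxE. Qed.
Lemma mk10 a b c d : mk a b c d 1 0 = c. Proof. by rewrite mxE. Qed.
Lemma mk11 a b c d : mk a b c d 1 1 = d. Proof. by rewrite mxE. Qed.

Lemma mkE (A : M) : A = mk (A 0 0) (A 0 1) (A 1 0) (A 1 1).
Proof.
apply/matrixP => i j; rewrite mxE.
by case: i => [[|[|//]] ?] ; case: j => [[|[|//]] ?] /=; congr (A _ _); apply: val_inj.
Qed.

Lemma mk_eq a b c d a' b' c' d' : a = a' -> b = b' -> c = c' -> d = d' ->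
  mk a b c d = mk a' b' c' d'.
Proof. by move=> -> -> -> ->. Qed.

Lemma mkZD r a b c d a' b' c' d' :
  r *: mk a b c d + mk a' b' c' d' = mk (r*a+a') (r*b+b') (r*c+c') (r*d+d').
Proof. by apply/matrixP => i j; rewrite !mxE; case: ifP; case: ifP. Qed.

Lemma mkZ r a b c d : r *: mk a b c d = mk (r*a) (r*b) (r*c) (r*d).
Proof. by apply/matrixP => i j; rewrite !mxE; case: ifP; case: ifP. Qed.

Lemma mkD a b c d a' b' c' d' :
  mk a b c d + mk a' b' c' d' = mk (a+a') (b+b') (c+c') (d+d').
Proof. by apply/matrixP => i j; rewrite !mxE; case: ifP; case: ifP. Qed.

Lemma adjE (A : M) i j : adjmx A i j = Num.conj (A j i).
Proof. by rewrite !mxE. Qed.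

Lemma hermE (A : M) : Defs.hermitian A -> forall i j, A i j = Num.conj (A j i).
Proof. by move=> h i j; have := f_equal (fun B : M => B i j) h => /= <-; rewrite adjE. Qed.

Lemma formE (A : M) x0 x1 y0 y1 : form A x0 x1 y0 y1 =
  Num.conj x0 * (A 0 0 * y0 + A 0 1 * y1) + Num.conj x1 * (A 1 0 * y0 + A 1 1 * y1).
Proof. by []. Qed.

Lemma psd_form (A : M) : Defs.psd A -> forall x y, 0 <= form A x y x y.
Proof.
move=> [_ h] x y.
have := h (\col_(i < 2) (if i == 0 then x else y)).
by rewrite quadE !mxE.
Qed.

Lemma form_conj (A : M) : Defs.hermitian A -> forall x0 x1 y0 y1,
  Num.conj (form A x0 x1 y0 y1) = form A y0 y1 x0 x1.
Proof.
move=> h x0 x1 y0 y1; rewrite /form !rmorphD !rmorphM /= !rmorphD !rmorphM /= !conjCK.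
rewrite -(hermE _ h 0 0) -(hermE _ h 0 1) -(hermE _ h 1 0) -(hermE _ h 1 1).
ring.
Qed.

Lemma form_lin (r : C) (A B : M) x0 x1 y0 y1 :
  form (r *: A + B) x0 x1 y0 y1 = r * form A x0 x1 y0 y1 + form B x0 x1 y0 y1.
Proof. rewrite /form !mxE. ring. Qed.

Lemma form_expand (A : M) s x0 x1 w0 w1 :
  form A (s*x0+w0) (s*x1+w1) (s*x0+w0) (s*x1+w1) =
  Num.conj s * s * form A x0 x1 x0 x1 + Num.conj s * form A x0 x1 w0 w1
  + s * form A w0 w1 x0 x1 + form A w0 w1 w0 w1.
Proof. rewrite /form !rmorphD !rmorphM. ring. Qed.


Lemma kernel (A : M) : Defs.psd A -> forall w0 w1, form A w0 w1 w0 w1 = 0 ->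
  forall x0 x1, form A x0 x1 w0 w1 = 0.
Proof.
move=> hA w0 w1 hw x0 x1.
have hh := hA.1.
have bc := form_conj _ hh x0 x1 w0 w1.
have qc := form_conj _ hh x0 x1 x0 x1.
have q0 := psd_form _ hA x0 x1.
move: bc qc q0.
set b := form A x0 x1 w0 w1.
set q := form A x0 x1 x0 x1 => bc qc q0.
have hwx : form A w0 w1 x0 x1 = b^* by rewrite bc.
have qE : form A x0 x1 x0 x1 = q by [].
have bE : form A x0 x1 w0 w1 = b by [].
clearbody b q.
have q1p : 0 < q + 1 by rewrite ltr_wpDl // ltr01.
have q1 : q + 1 != 0 by rewrite gt_eqF.
pose s := - b / (q + 1).
have := psd_form _ hA (s*x0+w0) (s*x1+w1).
rewrite form_expand hw hwx qE bE.
have sc : Num.conj s = - Num.conj b / (q+1).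
  by rewrite /s rmorphM rmorphN /= fmorphV rmorphD /= qc conjC1.
rewrite sc.
have -> : (- b^* / (q + 1)) * s * q + (- b^* / (q + 1)) * b + s * b^* + 0
   = - (b * b^* * (q + 2%:R) / (q + 1) ^+ 2).
  by rewrite /s; field.
rewrite oppr_ge0 => hle.
have hge : 0 <= b * b^* * (q + 2%:R) / (q + 1) ^+ 2.
  apply: divr_ge0; [apply: mulr_ge0; [exact: mul_conjC_ge0 | by rewrite addr_ge0] | exact: exprn_ge0 (ltW q1p)].
have X0 : b * b^* * (q + 2%:R) / (q + 1) ^+ 2 = 0 by apply/le_anti; rewrite hle hge.
have q2 : q + 2%:R != 0 by rewrite gt_eqF // ltr_wpDl // ltr0n.
move/eqP: X0; rewrite mulf_eq0 invr_eq0 expf_eq0 (negbTE q1) andbF orbF.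
by rewrite mulf_eq0 (negbTE q2) orbF mul_conjC_eq0 => /eqP.
Qed.


Lemma by_lin (x y E c d : C) : x - y = c * E + d * ('i * 'i + 1) -> E = 0 -> x = y.
Proof. by move=> h e; apply/eqP; rewrite -subr_eq0 h e mulCii addNr !mulr0 addr0. Qed.

Lemma kerE (A : M) w0 w1 : Defs.psd A -> form A w0 w1 w0 w1 = 0 ->
  A 0 0 * w0 + A 0 1 * w1 = 0 /\ A 1 0 * w0 + A 1 1 * w1 = 0.
Proof.
move=> hA hw; split.
  by have := kernel _ hA _ _ hw 1 0; rewrite /form conjC1 conjC0 mul1r mul0r addr0.
by have := kernel _ hA _ _ hw 0 1; rewrite /form conjC1 conjC0 mul1r mul0r add0r.
Qed.

Definition P1 := mk 1 0 0 0.
Definition P2 := mk 0 0 0 1.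
Definition P3 := mk 1 1 1 1.
Definition P4 := mk 1 (-1) (-1) 1.
Definition P5 := mk 1 (-'i) 'i 1.
Definition P6 := mk 1 'i (-'i) 1.

Lemma st1 (A : M) : Defs.psd A -> form A 0 1 0 1 = 0 -> A = A 0 0 *: P1.
Proof.
move=> hA hw; have [e1 e2] := kerE _ _ _ hA hw.
have h10 := hermE _ hA.1 1 0.
rewrite mulr0 mulr1 add0r in e1; rewrite mulr0 mulr1 add0r in e2.
rewrite e1 conjC0 in h10.
by rewrite [LHS]mkE /P1 mkZ e1 e2 h10 mulr1 mulr0.
Qed.

Lemma st2 (A : M) : Defs.psd A -> form A 1 0 1 0 = 0 -> A = A 1 1 *: P2.
Proof.
move=> hA hw; have [e1 e2] := kerE _ _ _ hA hw.
have h01 := hermE _ hA.1 0 1.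
rewrite mulr0 mulr1 addr0 in e1; rewrite mulr0 mulr1 addr0 in e2.
rewrite e2 conjC0 in h01.
by rewrite [LHS]mkE /P2 mkZ e1 e2 h01 mulr1 mulr0.
Qed.

Lemma st3 (A : M) : Defs.psd A -> form A 1 (-1) 1 (-1) = 0 -> A = A 0 0 *: P3.
Proof.
move=> hA hw; have [e1 e2] := kerE _ _ _ hA hw.
have h10 := hermE _ hA.1 1 0.
have h00 := hermE _ hA.1 0 0.
have a01 : A 0 1 = A 0 0 by apply: (@by_lin _ _ _ (-1) 0 _ e1); ring.
have a11 : A 1 1 = A 1 0 by apply: (@by_lin _ _ _ (-1) 0 _ e2); ring.
rewrite a01 -h00 in h10.
by rewrite [LHS]mkE /P3 mkZ a11 a01 h10 mulr1.
Qed.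

Lemma st4 (A : M) : Defs.psd A -> form A 1 1 1 1 = 0 -> A = A 0 0 *: P4.
Proof.
move=> hA hw; have [e1 e2] := kerE _ _ _ hA hw.
have h10 := hermE _ hA.1 1 0.
have h00 := hermE _ hA.1 0 0.
have a01 : A 0 1 = - A 0 0 by apply: (@by_lin _ _ _ 1 0 _ e1); ring.
have a11 : A 1 1 = - A 1 0 by apply: (@by_lin _ _ _ 1 0 _ e2); ring.
rewrite a01 rmorphN /= -h00 in h10.
by rewrite [LHS]mkE /P4 mkZ a11 a01 h10 mulr1 mulrN1 opprK.
Qed.

Lemma st5 (A : M) : Defs.psd A -> form A 1 (-'i) 1 (-'i) = 0 -> A = A 0 0 *: P5.
Proof.
move=> hA hw; have [e1 e2] := kerE _ _ _ hA hw.
have h10 := hermE _ hA.1 1 0.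
have h00 := hermE _ hA.1 0 0.
have a01 : A 0 1 = - 'i * A 0 0 by apply: (@by_lin _ _ _ 'i (A 0 1) _ e1); ring.
rewrite a01 rmorphM rmorphN /= conjCi opprK -h00 in h10.
have a11 : A 1 1 = A 0 0.
  by apply: (@by_lin _ _ _ 'i (A 1 1 - A 0 0) _ e2); rewrite h10; ring.
by rewrite [LHS]mkE /P5 mkZ a11 a01 h10 mulr1; apply: mk_eq; ring.
Qed.

Lemma st6 (A : M) : Defs.psd A -> form A 1 'i 1 'i = 0 -> A = A 0 0 *: P6.
Proof.
move=> hA hw; have [e1 e2] := kerE _ _ _ hA hw.
have h10 := hermE _ hA.1 1 0.
have h00 := hermE _ hA.1 0 0.
have a01 : A 0 1 = 'i * A 0 0 by apply: (@by_lin _ _ _ (-'i) (A 0 1) _ e1); ring.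
rewrite a01 rmorphM /= conjCi -h00 in h10.
have a11 : A 1 1 = A 0 0.
  by apply: (@by_lin _ _ _ (-'i) (A 1 1 - A 0 0) _ e2); rewrite h10; ring.
by rewrite [LHS]mkE /P6 mkZ a11 a01 h10 mulr1; apply: mk_eq; ring.
Qed.


Lemma mk_inj a b c d a' b' c' d' : mk a b c d = mk a' b' c' d' ->
  [/\ a = a', b = b', c = c' & d = d'].
Proof.
move=> h; split.
- by have := f_equal (fun B : M => B 0 0) h; rewrite !mk00.
- by have := f_equal (fun B : M => B 0 1) h; rewrite !mk01.
- by have := f_equal (fun B : M => B 1 0) h; rewrite !mk10.
- by have := f_equal (fun B : M => B 1 1) h; rewrite !mk11.
Qed.

Lemma psd_rank1 u0 u1 :
  Defs.psd (mk (u0 * u0^*) (u0 * u1^*) (u1 * u0^*) (u1 * u1^*)).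
Proof.
split.
  rewrite /Defs.hermitian [LHS]mkE !adjE !mk00 !mk01 !mk10 !mk11; apply: mk_eq;
  by rewrite rmorphM /= conjCK mulrC.
move=> v; rewrite quadE /form !mk00 !mk01 !mk10 !mk11.
have -> : (v 0 0)^* * (u0 * u0^* * v 0 0 + u0 * u1^* * v 1 0) +
  (v 1 0)^* * (u1 * u0^* * v 0 0 + u1 * u1^* * v 1 0) =
  ((v 0 0)^* * u0 + (v 1 0)^* * u1) * ((v 0 0)^* * u0 + (v 1 0)^* * u1)^*.
  rewrite rmorphD !rmorphM /= !conjCK; ring.
exact: mul_conjC_ge0.
Qed.

Lemma psdP1 : Defs.psd P1.
Proof. by have := psd_rank1 1 0; rewrite conjC1 conjC0 !mulr1 !mulr0. Qed.
Lemma psdP2 : Defs.psd P2.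
Proof. by have := psd_rank1 0 1; rewrite conjC1 conjC0 !mulr1 !mulr0. Qed.
Lemma psdP3 : Defs.psd P3.
Proof. by have := psd_rank1 1 1; rewrite conjC1 !mulr1. Qed.
Lemma psdP4 : Defs.psd P4.
Proof. by have := psd_rank1 1 (-1); rewrite rmorphN /= conjC1 !mulr1 mul1r mulN1r opprK. Qed.
Lemma psdP5 : Defs.psd P5.
Proof. by have := psd_rank1 1 'i; rewrite conjC1 conjCi !mulr1 mul1r mulrN mulCii opprK. Qed.
Lemma psdP6 : Defs.psd P6.
Proof.
have := psd_rank1 1 (-'i); rewrite rmorphN /= conjC1 conjCi opprK !mulr1 mul1r.
by rewrite mulNr mulCii opprK.
Qed.


Definition fS (psi : M -> M) : C :=
  form (psi P1) 0 1 0 1 + form (psi P2) 1 0 1 0 + form (psi P3) 1 (-1) 1 (-1)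
  + form (psi P4) 1 1 1 1 + form (psi P5) 1 (-'i) 1 (-'i) + form (psi P6) 1 'i 1 'i.

Definition fR (psi : M -> M) : R := complex.Re (fS psi).

Lemma linD (psi : M -> M) : clinear_map psi -> forall A B, psi (A + B) = psi A + psi B.
Proof. by move=> h A B; have := h 1 A B; rewrite !scale1r. Qed.

Lemma lin0 (psi : M -> M) : clinear_map psi -> psi 0 = 0.
Proof.
move=> h; have := linD _ h 0 0; rewrite addr0 => /eqP.
by rewrite -subr_eq0 opprD addrA subrr add0r oppr_eq0 => /eqP.
Qed.

Lemma linZ (psi : M -> M) : clinear_map psi -> forall a A, psi (a *: A) = a *: psi A.
Proof. by move=> h a A; have := h a A 0; rewrite (lin0 _ h) !addr0. Qed.

Lemma by_lin3 (x y L1 R1 L2 R2 c1 c2 d : C) :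
  2%:R * (x - y) = c1 * (L1 - R1) + c2 * (L2 - R2) + d * ('i * 'i + 1) ->
  L1 = R1 -> L2 = R2 -> x = y.
Proof.
move=> h e1 e2; move: h; rewrite e1 e2 !subrr mulCii addNr !mulr0 !addr0 => /eqP.
by rewrite mulf_eq0 pnatr_eq0 /= subr_eq0 => /eqP.
Qed.

Lemma ge0_Re (z : C) : 0 <= z -> (complex.Re z)%:C%C = z /\ 0 <= complex.Re z.
Proof.
rewrite lecE; case: z => a b /= /andP[/eqP b0 ha]; split => //.
by rewrite b0.
Qed.

Lemma face (psi : M -> M) : positive_map psi -> fR psi = 0 ->
  exists l : R, 0 <= l /\ forall A, psi A = (l%:C)%C *: A.
Proof.
move=> [lin pos] hf.
have t1 := psd_form _ (pos _ psdP1) 0 1.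
have t2 := psd_form _ (pos _ psdP2) 1 0.
have t3 := psd_form _ (pos _ psdP3) 1 (-1).
have t4 := psd_form _ (pos _ psdP4) 1 1.
have t5 := psd_form _ (pos _ psdP5) 1 (-'i).
have t6 := psd_form _ (pos _ psdP6) 1 'i.
have S0 : fS psi = 0.
  have hS : 0 <= fS psi := addr_ge0 (addr_ge0 (addr_ge0 (addr_ge0 (addr_ge0 t1 t2) t3) t4) t5) t6.
  have [h1 _] := ge0_Re _ hS; rewrite -h1; rewrite /fR in hf; by rewrite hf.
move/eqP: S0; rewrite /fS.
have s2 := addr_ge0 t1 t2; have s3 := addr_ge0 s2 t3.
have s4 := addr_ge0 s3 t4; have s5 := addr_ge0 s4 t5.
rewrite (paddr_eq0 s5 t6) => /andP[+ /eqP z6].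
rewrite (paddr_eq0 s4 t5) => /andP[+ /eqP z5].
rewrite (paddr_eq0 s3 t4) => /andP[+ /eqP z4].
rewrite (paddr_eq0 s2 t3) => /andP[+ /eqP z3].
rewrite (paddr_eq0 t1 t2) => /andP[/eqP z1 /eqP z2].
have E1 := st1 _ (pos _ psdP1) z1.
have E2 := st2 _ (pos _ psdP2) z2.
have E3 := st3 _ (pos _ psdP3) z3.
have E4 := st4 _ (pos _ psdP4) z4.
have E5 := st5 _ (pos _ psdP5) z5.
have E6 := st6 _ (pos _ psdP6) z6.
move: E1 E2 E3 E4 E5 E6.
move: (psi P1 0 0) (psi P2 1 1) (psi P3 0 0) (psi P4 0 0) (psi P5 0 0) (psi P6 0 0).
move=> a b c3 c4 c5 c6 E1 E2 E3 E4 E5 E6.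
have L1 : psi P3 + psi P4 = 2%:R *: psi P1 + 2%:R *: psi P2.
  rewrite -(linD _ lin) -!(linZ _ lin) -(linD _ lin); congr (psi _).
  by rewrite /P1 /P2 /P3 /P4 !mkZ !mkD; apply: mk_eq; ring.
have L2 : psi P5 + psi P6 = 2%:R *: psi P1 + 2%:R *: psi P2.
  rewrite -(linD _ lin) -!(linZ _ lin) -(linD _ lin); congr (psi _).
  by rewrite /P1 /P2 /P5 /P6 !mkZ !mkD; apply: mk_eq; ring.
rewrite E1 E2 E3 E4 /P1 /P2 /P3 /P4 !mkZ !mkD in L1.
rewrite E1 E2 E5 E6 /P1 /P2 /P5 /P6 !mkZ !mkD in L2.
case/mk_inj: L1 => q00 q01 _ q11.
case/mk_inj: L2 => r00 r01 _ _.
have ec3 : c3 = a by apply: (@by_lin3 _ _ _ _ _ _ 1 1 0 _ q00 q01); ring.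
have ec4 : c4 = a by apply: (@by_lin3 _ _ _ _ _ _ 1 (-1) 0 _ q00 q01); ring.
have eb : b = a by apply: (@by_lin3 _ _ _ _ _ _ (-1) 1 0 _ q11 q00); ring.
have ec5 : c5 = a by apply: (@by_lin3 _ _ _ _ _ _ 1 'i (c5 - c6) _ r00 r01); ring.
have ec6 : c6 = a by apply: (@by_lin3 _ _ _ _ _ _ 1 (-'i) (c6 - c5) _ r00 r01); ring.
have dec : forall A : M, 4%:R *: A = (4%:R * A 0 0) *: P1 + ((4%:R * A 1 1) *: P2
    + ((A 0 1 + A 1 0) *: P3 + ((-(A 0 1 + A 1 0)) *: P4
    + (('i * (A 0 1 - A 1 0)) *: P5 + (-'i * (A 0 1 - A 1 0)) *: P6)))).
  move=> A; rewrite {1}[A]mkE /P1 /P2 /P3 /P4 /P5 /P6 !mkZ !mkD; apply: mk_eq.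
  - by ring.
  - by apply: (@by_lin _ _ 0 0 (2%:R * (A 0 1 - A 1 0))) => //; ring.
  - by apply: (@by_lin _ _ 0 0 (- (2%:R * (A 0 1 - A 1 0)))) => //; ring.
  - by ring.
have key : forall A, psi A = a *: A.
  move=> A; have h4 : (4%:R : C) != 0 by rewrite pnatr_eq0.
  have : psi (4%:R *: A) = a *: (4%:R *: A).
    rewrite [in LHS](dec A) !(linD _ lin) !(linZ _ lin) E1 E2 E3 E4 E5 E6.
    rewrite ec3 ec4 eb ec5 ec6 [in RHS](dec A).
    by rewrite !scalerDr !scalerA !(mulrC a).
  rewrite (linZ _ lin) [in RHS]scalerA mulrC -scalerA.
  by move/(congr1 (fun B : M => 4%:R^-1 *: B)); rewrite !scalerA mulVf // !scale1r mulrA mulVf // mul1r.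
have fa : form (a *: P1) 1 0 1 0 = a.
  by rewrite /P1 mkZ /form !mk00 !mk01 !mk10 !mk11 conjC1 conjC0; ring.
have a0 : 0 <= a by rewrite -fa -E1; exact: (psd_form _ (pos _ psdP1) 1 0).
have [ha hl] := ge0_Re _ a0.
by exists (complex.Re a); split => // A; rewrite ha key.
Qed.


Lemma form_scale (c : C) (A : M) x0 x1 y0 y1 :
  form (c *: A) x0 x1 y0 y1 = c * form A x0 x1 y0 y1.
Proof. rewrite /form !mxE; ring. Qed.

Lemma psd_scale (c : C) (A : M) : 0 <= c -> Defs.psd A -> Defs.psd (c *: A).
Proof.
move=> c0 hA; split.
  rewrite /Defs.hermitian; apply/matrixP => i j.
  by rewrite adjE !mxE rmorphM /= conj_Creal ?ger0_real // -(hermE _ hA.1 i j).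
move=> v; rewrite quadE form_scale; apply: mulr_ge0 => //.
by rewrite -quadE; exact: hA.2 v.
Qed.

Lemma fSP : form P1 0 1 0 1 + form P2 1 0 1 0 + form P3 1 (-1) 1 (-1)
  + form P4 1 1 1 1 + form P5 1 (-'i) 1 (-'i) + form P6 1 'i 1 'i = 0.
Proof.
rewrite /form /P1 /P2 /P3 /P4 /P5 /P6 !mk00 !mk01 !mk10 !mk11.
rewrite !rmorphN /= conjC0 conjC1 conjCi opprK.
by apply: (@by_lin _ _ 0 0 2%:R) => //; ring.
Qed.

Lemma ReD (x y : C) : complex.Re (x + y) = complex.Re x + complex.Re y.
Proof. by case: x; case: y. Qed.

Lemma ReM (r : R) (x : C) : complex.Re ((r%:C)%C * x) = r * complex.Re x.
Proof. by case: x => a b /=; rewrite mul0r subr0. Qed.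

Lemma ray (psi : M -> M) (l : R) : 0 <= l -> (forall A, psi A = (l%:C)%C *: A) ->
  positive_map psi /\ fR psi = 0.
Proof.
move=> l0 hpsi; have c0 : 0 <= (l%:C)%C :> C by rewrite ler0c.
split; first split.
- by move=> a A B; rewrite !hpsi scalerDr !scalerA mulrC.
- by move=> A hA; rewrite hpsi; exact: psd_scale.
rewrite /fR /fS !hpsi !form_scale -!mulrDr fSP mulr0.
by [].
Qed.

Lemma fR_lin : real_lin_functional fR.
Proof.
move=> r phi psi _ _; rewrite /fR.
have -> : fS (fun A => (r%:C)%C *: phi A + psi A) = (r%:C)%C * fS phi + fS psi.
  by rewrite /fS !form_lin; ring.
by rewrite ReD ReM.
Qed.

Lemma fR_ge0 (psi : M -> M) : positive_map psi -> 0 <= fR psi.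
Proof.
move=> [lin pos].
have t1 := psd_form _ (pos _ psdP1) 0 1.
have t2 := psd_form _ (pos _ psdP2) 1 0.
have t3 := psd_form _ (pos _ psdP3) 1 (-1).
have t4 := psd_form _ (pos _ psdP4) 1 1.
have t5 := psd_form _ (pos _ psdP5) 1 (-'i).
have t6 := psd_form _ (pos _ psdP6) 1 'i.
have hS : 0 <= fS psi := addr_ge0 (addr_ge0 (addr_ge0 (addr_ge0 (addr_ge0 t1 t2) t3) t4) t5) t6.
by have [_ ->] := ge0_Re _ hS.
Qed.

End Helpers.

Theorem proposition3p3 (R : realType) : exposed_ray (@id (M2 R)).
Proof.
have hid : forall A : M2 R, id A = ((1 : R)%:C)%C *: A by move=> A; rewrite scale1r.
have [pid _] := ray _ _ _ ler01 hid.
split => //; split.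
  by exists (1 : 'M[R[i]]_2); rewrite oner_neq0.
exists (@fR R); split; first exact: fR_lin.
split; first exact: fR_ge0.
move=> psi; split.
  by move=> [hp hf]; have [l [l0 hl]] := face _ _ hp hf; exists l.
by move=> [l [l0 hl]]; exact: ray _ _ _ l0 hl.
Qed.
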